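(* Let $\mathbb F_q$ be a finite field, let $B \subseteq \mathbb F_q^m$ with $r := \mathrm{rank}_{\mathrm{aff}}(B) \geq 1$, and let $\mathcal F$ be any family of affine configurations (subsets of finite-dimensional vector spaces over $\mathbb F_q$). Let $n \geq r$, $N = q^n$, and let $\alpha$ be defined by $\mathrm{ex}_{\mathrm{aff}}(n, B \times \mathcal F) = \alpha N$. Let $c(B,n,\alpha)$ denote the minimum, over all $A \subseteq \mathbb F_q^n$ with $|A| = \alpha N$, of the number of non-degenerate affine homomorphisms $B \to A$. Then \[c(B,n,\alpha) \leq q^{r-1} N^{r-1}\, \mathrm{ex}_{\mathrm{aff}}(n-r+1, \mathcal F).\]
   Context: An affine relation on $x_1,\ldots,x_k$ is an equation $\sum_i \lambda_i x_i = 0$ with $\lambda_i \in \mathbb F_q$, $\sum_i \lambda_i = 0$; a set is affinely independent if it has no such relation with some $\lambda_i \neq 0$, and $\mathrm{rank}_{\mathrm{aff}}(B)$ is the size of a maximal affinely independent subset of $B$. For $B \subseteq \mathbb F_q^m$, $A \subseteq \mathbb F_q^n$, an affine homomorphism $B \to A$ is a map extending to an affine map $\mathbb F_q^m \to \mathbb F_q^n$; it is non-degenerate if it is injective and its inverse on the image is also an affine homomorphism. $A$ contains an affine copy of $B$ if there is a non-degenerate affine homomorphism $B \to A$. For a family $\mathcal B$ of configurations, $\mathrm{ex}_{\mathrm{aff}}(n,\mathcal B)$ is the maximum size of a subset of $\mathbb F_q^n$ containing no affine copy of any member of $\mathcal B$. For $B \subseteq \mathbb F_q^m$ and $F \subseteq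 \mathbb F_q^{k}$, $B \times F = \{(x,y) \in \mathbb F_q^{m+k} : x \in B, y \in F\}$, and $B \times \mathcal F := \{B \times F : F \in \mathcal F\}$. *)

(* Defs.v *)
(* Vectors of F_q^m are row vectors 'rV[F]_m over a finite field F (q = #|F|). *)
From HB Require Import structures.
From mathcomp Require Import all_boot all_order all_algebra.
Set Implicit Arguments. Unset Strict Implicit. Unset Printing Implicit Defensive.
Import Order.TTheory GRing.Theory.
Local Open Scope ring_scope.

Definition affine_on (F : finFieldType) (m n : nat) (B : {set 'rV[F]_m})
  (g : 'rV[F]_m -> 'rV[F]_n) : bool :=
  [exists M : 'M[F]_(m, n), exists v : 'rV[F]_n, [forall x in B, g x == x *m M + v]].

Definition nd_hom (F : finFieldType) (m n : nat) (B : {set 'rV[F]_m})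
  (A : {set 'rV[F]_n}) (g : 'rV[F]_m -> 'rV[F]_n) : bool :=
  [&& affine_on B g,
      [forall x in B, g x \in A],
      [forall x in B, forall y in B, (g x == g y) ==> (x == y)] &
      [exists M' : 'M[F]_(n, m), exists v' : 'rV[F]_m,
         [forall x in B, x == g x *m M' + v']]].

Definition contains_copy (F : finFieldType) (n k : nat) (A : {set 'rV[F]_n})
  (C : {set 'rV[F]_k}) : bool :=
  [exists g : {ffun 'rV[F]_k -> 'rV[F]_n}, nd_hom C A g].

(* number of non-degenerate affine homomorphisms B -> A (maps on B are encoded
   as functions on F^m that vanish outside B) *)
Definition nd_count (F : finFieldType) (m n : nat) (B : {set 'rV[F]_m})
  (A : {set 'rV[F]_n}) : nat :=
  #|[set g : {ffun 'rV[F]_m -> 'rV[F]_n} |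
       [forall x in ~: B, g x == 0] && nd_hom B A g]|.

Definition config (F : finFieldType) := {k : nat & {set 'rV[F]_k}}.

Definition prod_set (F : finFieldType) (m k : nat) (B : {set 'rV[F]_m})
  (S : {set 'rV[F]_k}) : {set 'rV[F]_(m + k)} :=
  [set row_mx x y | x in B, y in S].

Definition prod_config (F : finFieldType) (m : nat) (B : {set 'rV[F]_m})
  (c : config F) : config F :=
  existT (fun k => {set 'rV[F]_k}) (m + projT1 c)%N (prod_set B (projT2 c)).

Definition prod_family (F : finFieldType) (m : nat) (B : {set 'rV[F]_m})
  (Fam : config F -> Prop) : config F -> Prop :=
  fun c => exists c', Fam c' /\ c = prod_config B c'.

Definition fam_free (F : finFieldType) (n : nat) (Fam : config F -> Prop)
  (A : {set 'rV[F]_n}) : Prop :=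
  forall c, Fam c -> ~~ contains_copy A (projT2 c).

(* is_ex_aff n Fam e  <->  ex_aff(n, Fam) = e  (e is the maximum size of a Fam-free subset of F^n) *)
Definition is_ex_aff (F : finFieldType) (n : nat) (Fam : config F -> Prop) (e : nat) : Prop :=
  (exists A : {set 'rV[F]_n}, fam_free Fam A /\ #|A| = e) /\
  (forall A : {set 'rV[F]_n}, fam_free Fam A -> (#|A| <= e)%N).

Definition aff_indep (F : finFieldType) (m : nat) (S : {set 'rV[F]_m}) : bool :=
  [forall lam : {ffun 'rV[F]_m -> F},
     ((\sum_(x in S) lam x == 0) && (\sum_(x in S) lam x *: x == 0))
       ==> [forall x in S, lam x == 0]].

Definition rank_aff (F : finFieldType) (m : nat) (B : {set 'rV[F]_m}) : nat :=
  (\max_(S : {set 'rV[F]_m} | (S \subset B) && aff_indep S) #|S|)%N.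

(* c(B, n, alpha) with alpha N = e : minimum over |A| = e of nd_count B A
   (the default of the min is an upper bound for every nd_count) *)
Definition c_min (F : finFieldType) (m : nat) (B : {set 'rV[F]_m}) (n e : nat) : nat :=
  \big[minn/#|{ffun 'rV[F]_m -> 'rV[F]_n}|]_(A : {set 'rV[F]_n} | #|A| == e) nd_count B A.

(* Main.v *)
Require Import Defs.
From mathcomp Require Import all_boot all_order all_algebra.
From Stdlib Require Import FunctionalExtensionality.
From mathcomp Require Import zify.
Set Implicit Arguments. Unset Strict Implicit. Unset Printing Implicit Defensive.
Import Order.TTheory GRing.Theory.
Local Open Scope ring_scope.

Definition aff_fun (F : fieldType) (a b : nat) (f : 'rV[F]_a -> 'rV[F]_b) : Prop :=
  exists (M : 'M[F]_(a, b)) (v : 'rV[F]_b), forall w, f w = w *m M + v.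

Lemma aff_id (F : fieldType) a : aff_fun (fun w : 'rV[F]_a => w).
Proof. by exists 1%:M, 0 => w; rewrite mulmx1 addr0. Qed.

Lemma aff_cst (F : fieldType) a b (c : 'rV[F]_b) : aff_fun (fun w : 'rV[F]_a => c).
Proof. by exists 0, c => w; rewrite mulmx0 add0r. Qed.

Lemma aff_add (F : fieldType) a b (f g : 'rV[F]_a -> 'rV[F]_b) :
  aff_fun f -> aff_fun g -> aff_fun (fun w => f w + g w).
Proof.
move=> [M1 [v1 H1]] [M2 [v2 H2]]; exists (M1 + M2), (v1 + v2) => w.
by rewrite H1 H2 mulmxDr addrACA.
Qed.

Lemma aff_opp (F : fieldType) a b (f : 'rV[F]_a -> 'rV[F]_b) :
  aff_fun f -> aff_fun (fun w => - f w).
Proof.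
move=> [M1 [v1 H1]]; exists (- M1), (- v1) => w.
by rewrite H1 mulmxN opprD.
Qed.

Lemma aff_mul (F : fieldType) a b c (f : 'rV[F]_a -> 'rV[F]_b) (N : 'M[F]_(b, c)) :
  aff_fun f -> aff_fun (fun w => f w *m N).
Proof.
move=> [M1 [v1 H1]]; exists (M1 *m N), (v1 *m N) => w.
by rewrite H1 mulmxDl mulmxA.
Qed.

Lemma aff_row (F : fieldType) a b1 b2 (f : 'rV[F]_a -> 'rV[F]_b1) (g : 'rV[F]_a -> 'rV[F]_b2) :
  aff_fun f -> aff_fun g -> aff_fun (fun w => row_mx (f w) (g w)).
Proof.
move=> [M1 [v1 H1]] [M2 [v2 H2]]; exists (row_mx M1 M2), (row_mx v1 v2) => w.
by rewrite H1 H2 mul_mx_row add_row_mx.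
Qed.

Lemma bigminn_le (I : finType) (P : pred I) (F : I -> nat) x j :
  P j -> (\big[minn/x]_(i | P i) F i <= F j)%N.
Proof.
move=> Pj; have : j \in index_enum I by rewrite mem_index_enum.
elim: (index_enum I) => [//|a s IH]; rewrite inE big_cons => /orP[/eqP<-|/IH H].
  by rewrite Pj geq_minl.
case: (P a) => //; exact: leq_trans (geq_minr _ _) H.
Qed.

Definition spans (F : finFieldType) m (B S : {set 'rV[F]_m}) :=
  forall b, b \in B -> exists mu : {ffun 'rV[F]_m -> F},
    \sum_(s in S) mu s = 1 /\ b = \sum_(s in S) mu s *: s.

Lemma span_max (F : finFieldType) m (B S : {set 'rV[F]_m}) :
  S \subset B -> aff_indep S ->
  (forall S' : {set 'rV[F]_m}, S' \subset B -> aff_indep S' -> (#|S'| <= #|S|)%N) -> spans B S.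
Proof.
move=> SB iS Smax b bB.
case bS: (b \in S).
  exists [ffun x => (x == b)%:R]; split.
    rewrite (bigD1 b) //= ffunE eqxx big1 ?addr0 // => i /andP[_ /negbTE].
    by rewrite ffunE => ->.
  rewrite (bigD1 b) //= ffunE eqxx scale1r big1 ?addr0 // => i /andP[_ /negbTE].
  by rewrite ffunE => ->; rewrite scale0r.
have : ~~ aff_indep (b |: S).
  apply/negP => H.
  have Hs : b |: S \subset B by rewrite subUset sub1set bB SB.
  by have := Smax _ Hs H; rewrite cardsU1 bS ltnn.
case/forallPn => lam; rewrite negb_imply => /andP[/andP[/eqP H1 /eqP H2] /forallPn[x]].
rewrite negb_imply => /andP[xbS lx].
rewrite big_setU1 ?bS //= in H1; rewrite big_setU1 ?bS //= in H2.
have lb : lam b != 0.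
  apply/negP => /eqP lb0; move: H1 H2; rewrite lb0 add0r scale0r add0r => H1 H2.
  have /forall_inP Hz : [forall x in S, lam x == 0].
    by move/forallP: iS => /(_ lam); rewrite H1 H2 eqxx /= => /implyP; apply.
  move: xbS lx; rewrite in_setU1 => /orP[/eqP->|/Hz ->//]; by rewrite lb0 eqxx.
exists [ffun x => - lam x / lam b]; split.
  under eq_bigr do rewrite ffunE.
  rewrite -mulr_suml sumrN.
  have -> : \sum_(i in S) lam i = - lam b by apply/eqP; rewrite -addr_eq0 addrC H1.
  by rewrite opprK divff.
under eq_bigr do rewrite ffunE mulrC -scalerA scaleNr.
rewrite -scaler_sumr sumrN.
have -> : \sum_(i in S) lam i *: i = - (lam b *: b) by apply/eqP; rewrite -addr_eq0 addrC H2.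
by rewrite opprK scalerA mulVf // scale1r.
Qed.

Lemma aff_comb (F : finFieldType) m n (B S : {set 'rV[F]_m}) (g : 'rV[F]_m -> 'rV[F]_n)
  (mu : {ffun 'rV[F]_m -> F}) :
  S \subset B -> affine_on B g -> \sum_(s in S) mu s = 1 ->
  (\sum_(s in S) mu s *: s) \in B ->
  g (\sum_(s in S) mu s *: s) = \sum_(s in S) mu s *: g s.
Proof.
move=> SB /existsP[M /existsP[v /forall_inP Hg]] Hmu bB.
rewrite (eqP (Hg _ bB)).
rewrite (eq_bigr (fun s => mu s *: (s *m M + v))); last first.
  by move=> s sS; rewrite (eqP (Hg _ (subsetP SB _ sS))).
rewrite mulmx_suml.
under [in RHS]eq_bigr do rewrite scalerDr.
rewrite big_split /= -scaler_suml Hmu scale1r.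
by congr (_ + _); apply: eq_bigr => s _; rewrite scalemxAl.
Qed.

Lemma trans_on (F : finFieldType) m n (B S : {set 'rV[F]_m}) s0 (g g1 : 'rV[F]_m -> 'rV[F]_n) :
  S \subset B -> spans B S -> affine_on B g -> affine_on B g1 ->
  (forall s, s \in S -> g s - g s0 = g1 s - g1 s0) ->
  forall b, b \in B -> g b = g1 b + (g s0 - g1 s0).
Proof.
move=> SB sp ag ag1 Hs b bB.
have [mu [Hmu Hb]] := sp b bB; rewrite Hb in bB *.
rewrite (aff_comb SB ag) // (aff_comb SB ag1) //.
rewrite (eq_bigr (fun s => mu s *: g1 s + mu s *: (g s0 - g1 s0))); last first.
  move=> s sS; rewrite -scalerDr; congr (_ *: _).
  by rewrite -[g s](subrK (g s0)) Hs // addrAC addrA.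
by rewrite big_split /= -scaler_suml Hmu scale1r.
Qed.

Definition Kmat (F : finFieldType) m n (S : {set 'rV[F]_m}) s0 (g1 : 'rV[F]_m -> 'rV[F]_n) :
  'M[F]_(#|S :\ s0|, n) := \matrix_(i < #|S :\ s0|) (g1 (enum_val i) - g1 s0).

Lemma in_span_K (F : finFieldType) m n (B S : {set 'rV[F]_m}) s0 (g1 : 'rV[F]_m -> 'rV[F]_n) :
  S \subset B -> spans B S -> affine_on B g1 -> s0 \in S ->
  forall b, b \in B -> (g1 b - g1 s0 <= Kmat S s0 g1)%MS.
Proof.
move=> SB sp ag1 s0S b bB.
have [mu [Hmu Hb]] := sp b bB; rewrite Hb in bB *.
rewrite (aff_comb SB ag1) //.
have -> : \sum_(s in S) mu s *: g1 s - g1 s0 = \sum_(s in S) mu s *: (g1 s - g1 s0).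
  under [in RHS]eq_bigr do rewrite scalerBr.
  by rewrite sumrB -scaler_suml Hmu scale1r.
apply: summx_sub => s sS; apply: scalemx_sub.
case: (eqVneq s s0) => [->|ne]; first by rewrite subrr sub0mx.
have sS' : s \in S :\ s0 by rewrite in_setD1 ne.
have := row_sub (enum_rank_in sS' s) (Kmat S s0 g1).
by rewrite /Kmat rowK enum_rankK_in.
Qed.

Lemma sum_enum (F : finFieldType) m (V : lmodType F) (S : {set 'rV[F]_m}) s0
  (c : 'I_#|S :\ s0| -> F) (f : 'rV[F]_m -> V) :
  \sum_i c i *: f (enum_val i) =
  \sum_(x in S) (\sum_(i | enum_val i == x) c i) *: f x.
Proof.
rewrite (partition_big (fun i => enum_val i) (mem S)) => [|i _]; last first.
  by have := enum_valP i; rewrite in_setD1 => /andP[].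
apply: eq_bigr => x _; rewrite scaler_suml; apply: eq_bigr => i /eqP <-//.
Qed.

Lemma sum_enum_s (F : finFieldType) m (S : {set 'rV[F]_m}) s0
  (c : 'I_#|S :\ s0| -> F) :
  \sum_i c i = \sum_(x in S) (\sum_(i | enum_val i == x) c i).
Proof.
rewrite (partition_big (fun i => enum_val i) (mem S)) => [//|i _].
by have := enum_valP i; rewrite in_setD1 => /andP[].
Qed.

Lemma rowfree_K (F : finFieldType) m n (B S : {set 'rV[F]_m}) (A : {set 'rV[F]_n}) s0
  (g1 : 'rV[F]_m -> 'rV[F]_n) :
  S \subset B -> aff_indep S -> nd_hom B A g1 -> s0 \in S ->
  row_free (Kmat S s0 g1).
Proof.
move=> SB iS /and4P[ag1 _ _ /existsP[M' /existsP[v' /forall_inP Hinv]]] s0S.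
apply: inj_row_free => v Hv.
pose V := \sum_i v 0 i.
pose c x := \sum_(i | enum_val i == x) v 0 i.
pose lam := [ffun x => c x - (x == s0)%:R * V].
have HV : \sum_(x in S) (x == s0)%:R * V = V.
  rewrite (bigD1 s0) //= eqxx mul1r big1 ?addr0 // => i /andP[_ /negbTE ->].
  by rewrite mul0r.
have Hs1 : \sum_(x in S) lam x = 0.
  under eq_bigr do rewrite ffunE.
  by rewrite sumrB HV /V (@sum_enum_s _ _ S s0 (fun i => v 0 i)) subrr.
have Hs2 : \sum_(x in S) lam x *: g1 x = 0.
  under eq_bigr do rewrite ffunE scalerBl.
  rewrite sumrB -(@sum_enum _ _ _ S s0 (fun i => v 0 i) g1).
  have -> : \sum_(i in S) ((i == s0)%:R * V) *: g1 i = V *: g1 s0.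
    rewrite (bigD1 s0) //= eqxx mul1r big1 ?addr0 // => i /andP[_ /negbTE ->].
    by rewrite mul0r scale0r.
  rewrite /V scaler_suml -sumrB.
  under eq_bigr do rewrite -scalerBr.
  rewrite -[RHS]Hv mulmx_sum_row; apply: eq_bigr => i _.
  by rewrite /Kmat rowK.
have Hs3 : \sum_(x in S) lam x *: x = 0.
  rewrite (eq_bigr (fun x => lam x *: (g1 x *m M' + v'))); last first.
    by move=> x xS; rewrite -(eqP (Hinv _ (subsetP SB _ xS))).
  under eq_bigr do rewrite scalerDr.
  rewrite big_split /= -scaler_suml Hs1 scale0r addr0.
  under eq_bigr do rewrite scalemxAl.
  by rewrite -mulmx_suml Hs2 mul0mx.
have /forall_inP Hz : [forall x in S, lam x == 0].
  by move/forallP: iS => /(_ lam); rewrite Hs1 Hs3 eqxx /= => /implyP; apply.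
apply/matrixP => i j; rewrite ord1 mxE.
have := enum_valP j; rewrite in_setD1 => /andP[ne jS].
have := Hz _ jS; rewrite ffunE (negbTE ne) mul0r subr0 /c.
rewrite (big_pred1 j) => [/eqP //|k /=].
by rewrite (inj_eq enum_val_inj).
Qed.

Lemma exists_compl (F : fieldType) p n d (K : 'M[F]_(p, n)) :
  row_free K -> (p + d = n)%N -> exists L : 'M_(d, n), row_full (col_mx K L).
Proof.
move=> fK Hpd.
have Hr : \rank (K^C)%MS = d by rewrite mxrank_compl (eqP fK) -Hpd addKn.
suff H : forall d' (E : \rank (K^C)%MS = d'), exists L : 'M_(d', n), row_full (col_mx K L).
  exact: H Hr.
move=> d' <-; exists (row_base (K^C)%MS).
rewrite -(eq_row_full (addsmxE _ _)).
rewrite (eq_row_full (adds_eqmx (eqmx_refl K) (eq_row_base _))).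
exact: addsmx_compl_full.
Qed.

Lemma z1 (V : zmodType) (a b c d : V) : (a + c) - (b + d) = (a - b) + (c - d).
Proof. by rewrite opprD addrACA. Qed.
Lemma z2 (V : zmodType) (x s k t : V) : x + (k + t) - (s + k) = (x - s) + t.
Proof. by rewrite z1 (addrC k t) addrK. Qed.
Lemma z3 (V : zmodType) (x k t : V) : x + (k + t) - k - t = x.
Proof. by rewrite addrCA addrC addrK addrK. Qed.
Lemma z4 (V : zmodType) (a b c d e : V) : a + b + (c + (d + e)) = a + d + (b + (c + e)).
Proof. by rewrite -!addrA (addrCA c d) (addrCA b d). Qed.
Lemma z5 (V : zmodType) (a b s : V) : a - b = (a - s) - (b - s).
Proof. by rewrite opprB addrA subrK. Qed.

Lemma prod_hom (F : finFieldType) m n p d k (B : {set 'rV[F]_m}) s0 (A : {set 'rV[F]_n})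
  (g1 : 'rV[F]_m -> 'rV[F]_n) (K : 'M[F]_(p, n)) (L : 'M[F]_(d, n)) (a : 'rV[F]_p)
  (C : {set 'rV[F]_k}) (g' : 'rV[F]_k -> 'rV[F]_d) :
  row_free (col_mx K L) ->
  (forall b, b \in B -> (g1 b - g1 s0 <= K)%MS) ->
  nd_hom B A g1 ->
  nd_hom C [set u : 'rV_d | [forall b in B, g1 b + (a *m K + u *m L) \in A]] g' ->
  nd_hom (prod_set B C) A (fun z => g1 (lsubmx z) + (a *m K + g' (rsubmx z) *m L)).
Proof.
move=> fC spK /and4P[/existsP[M1 /existsP[v1 /forall_inP H1]] /forall_inP inA1
  /forall_inP inj1 /existsP[M1' /existsP[v1' /forall_inP Hi1]]].
move=> /and4P[/existsP[M2 /existsP[v2 /forall_inP H2]] /forall_inP inU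
  /forall_inP inj2 /existsP[M2' /existsP[v2' /forall_inP Hi2]]].
have Pz : forall z, z \in prod_set B C -> exists x y, [/\ x \in B, y \in C & z = row_mx x y].
  by move=> z /imset2P[x y xB yC ->]; exists x, y.
have hE : forall x y, (fun z => g1 (lsubmx z) + (a *m K + g' (rsubmx z) *m L)) (row_mx x y)
   = g1 x + (a *m K + g' y *m L).
  by move=> x y /=; rewrite row_mxKl row_mxKr.
apply/and4P; split.
- apply/existsP; exists (col_mx M1 (M2 *m L)); apply/existsP; exists (v1 + (a *m K + v2 *m L)).
  apply/forall_inP => z /Pz [x [y [xB yC ->]]]; rewrite hE.
  rewrite (eqP (H1 _ xB)) (eqP (H2 _ yC)) mul_row_col mulmxDl mulmxA.
  by rewrite z4.
- apply/forall_inP => z /Pz [x [y [xB yC ->]]]; rewrite hE.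
  have := inU _ yC; rewrite inE => /forall_inP; apply; exact: xB.
- apply/forall_inP => z /Pz [x [y [xB yC ->]]]; apply/forall_inP => z' /Pz [x' [y' [xB' yC' ->]]].
  rewrite !hE; apply/implyP => /eqP Heq.
  have [cx Hcx] := submxP (spK _ xB); have [cx' Hcx'] := submxP (spK _ xB').
  have H0 : row_mx (cx - cx') (g' y - g' y') *m col_mx K L = 0 *m col_mx K L.
    rewrite mul0mx mul_row_col !mulmxBl -Hcx -Hcx' -z5.
    have : g1 x + (a *m K + g' y *m L) - (g1 x' + (a *m K + g' y' *m L)) = 0.
      by rewrite Heq subrr.
    by rewrite z1 z1 subrr add0r.
  have /eqP := row_free_inj fC H0; rewrite row_mx_eq0 !subr_eq0 => /andP[/eqP Ec /eqP Eg].
  have Ey : y = y'.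
    apply/eqP; have := inj2 _ yC => /forall_inP /(_ _ yC') /implyP; apply.
    by rewrite Eg.
  have Ex : x = x'.
    apply/eqP; have := inj1 _ xB => /forall_inP /(_ _ xB') /implyP; apply.
    by move: Heq; rewrite Eg => /addIr ->.
  by rewrite Ex Ey.
- have [Q' HQ'] := row_freeP fC.
  pose c0 := g1 s0 + a *m K.
  pose Q2 := rsubmx Q'.
  pose phi := fun w : 'rV[F]_n => row_mx ((w + - (a *m K) + - ((w + - c0) *m Q2 *m L)) *m M1' + v1')
     ((w + - c0) *m Q2 *m M2' + v2').
  have aphi : aff_fun phi.
    rewrite /phi.
    repeat (apply: aff_id || apply: aff_cst || apply: aff_row || apply: aff_add ||
            apply: aff_opp || apply: aff_mul).
  have [M' [v' Hphi]] := aphi.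
  apply/existsP; exists M'; apply/existsP; exists v'.
  apply/forall_inP => z /Pz [x [y [xB yC ->]]].
  rewrite -Hphi hE /phi.
  have [cx Hcx] := submxP (spK _ xB).
  have EQ : (g1 x + (a *m K + g' y *m L) - c0) *m Q2 = g' y.
    rewrite /c0 z2 Hcx -mul_row_col /Q2 mulmx_rsub -mulmxA HQ' mulmx1.
    by rewrite row_mxKr.
  rewrite EQ z3 -(eqP (Hi1 _ xB)) -(eqP (Hi2 _ yC)).
  by [].
Qed.

Lemma nd_hom_ext (F : finFieldType) m n (B : {set 'rV[F]_m}) (A : {set 'rV[F]_n}) g h :
  g =1 h -> nd_hom B A g = nd_hom B A h.
Proof. by move=> /functional_extensionality ->. Qed.

Definition Tset (F : finFieldType) m n (B : {set 'rV[F]_m}) (A : {set 'rV[F]_n})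
  (g1 : 'rV[F]_m -> 'rV[F]_n) := [set t : 'rV_n | [forall b in B, g1 b + t \in A]].

Lemma tset_bound (F : finFieldType) m n d (B S : {set 'rV[F]_m}) s0 (A : {set 'rV[F]_n})
  (Fam : config F -> Prop) (g1 : 'rV[F]_m -> 'rV[F]_n) e2 :
  S \subset B -> aff_indep S -> spans B S -> s0 \in S -> nd_hom B A g1 ->
  fam_free (prod_family B Fam) A -> is_ex_aff d Fam e2 -> (#|S :\ s0| + d = n)%N ->
  (#|Tset B A g1| <= #|F| ^ #|S :\ s0| * e2)%N.
Proof.
move=> SB iS sp s0S ndh HA [_ He2] Hpd.
have ag1 : affine_on B g1 by case/and4P: ndh.
have fK := rowfree_K SB iS ndh s0S.
have [L fullC] := exists_compl fK Hpd.
have freeC : row_free (col_mx (Kmat S s0 g1) L).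
  by rewrite /row_free; move/eqP: fullC => ->; rewrite Hpd.
have spK := in_span_K SB sp ag1 s0S.
pose Ua a := [set u : 'rV_d | [forall b in B, g1 b + (a *m Kmat S s0 g1 + u *m L) \in A]].
have HU : forall a, (#|Ua a| <= e2)%N.
  move=> a; apply: He2 => -[k C] Hc /=; apply/negP => /existsP [g' Hg'].
  have Hh := prod_hom freeC spK ndh Hg'.
  have := HA (prod_config B (existT _ k C)) (ex_intro _ _ (conj Hc erefl)).
  move/negP; apply; apply/existsP.
  exists [ffun z => g1 (lsubmx z) + (a *m Kmat S s0 g1 + g' (rsubmx z) *m L)].
  by rewrite (nd_hom_ext _ _ (ffunE _)).
have [Q HQ] := row_fullP fullC.
set K := Kmat S s0 g1.
pose P := [set w : 'rV_(#|S :\ s0| + d) | rsubmx w \in Ua (lsubmx w)].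
have HC : forall w : 'rV_(#|S :\ s0| + d), w *m col_mx K L = lsubmx w *m K + rsubmx w *m L.
  by move=> w; rewrite -{1}(hsubmxK w) mul_row_col.
have zQC : forall z : 'rV_n, z *m Q *m col_mx K L = z by move=> z; rewrite -mulmxA HQ mulmx1.
have injQ : {in Tset B A g1 &, injective (fun z : 'rV_n => z *m Q)}.
  by move=> z z' _ _ /= E; rewrite -(zQC z) E zQC.
have subP : [set z *m Q | z in Tset B A g1] \subset P.
  apply/subsetP => w /imsetP[z zT ->]; rewrite inE inE -HC zQC.
  by move: zT; rewrite inE.
rewrite -(card_in_imset injQ); apply: leq_trans (subset_leq_card subP) _.
rewrite -sum1_card (partition_big (@lsubmx _ 1 _ _) predT) //=.
apply: leq_trans (_ : _ <= \sum_(a : 'rV_#|S :\ s0|) e2)%N _.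
  apply: leq_sum => a _.
  apply: leq_trans (_ : _ <= #|[set w in P | lsubmx w == a]|)%N _.
    by rewrite -sum1_card; apply/eq_leq/eq_bigl => w; rewrite inE.
  apply: leq_trans (HU a).
  have injR : {in [set w in P | lsubmx w == a] &, injective (@rsubmx _ 1 _ _)}.
    move=> w w'; rewrite !inE => /andP[_ /eqP Hw] /andP[_ /eqP Hw'] E.
    by rewrite -(hsubmxK w) -(hsubmxK w') E Hw Hw'.
  rewrite -(card_in_imset injR); apply: subset_leq_card; apply/subsetP => u /imsetP[w].
  by rewrite !inE => /andP[Hw /eqP <-] ->.
by rewrite sum_nat_const card_mx mul1n.
Qed.

Lemma fiber_bound (F : finFieldType) m n d (B S : {set 'rV[F]_m}) s0 (A : {set 'rV[F]_n})
  (Fam : config F -> Prop) e2 (k : {ffun 'I_#|S :\ s0| -> 'rV[F]_n}) :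
  S \subset B -> aff_indep S -> spans B S -> s0 \in S ->
  fam_free (prod_family B Fam) A -> is_ex_aff d Fam e2 -> (#|S :\ s0| + d = n)%N ->
  (#|[set g : {ffun 'rV[F]_m -> 'rV[F]_n} | ([forall x in ~: B, g x == 0%R] && nd_hom B A g)
        && ([ffun i : 'I_#|S :\ s0| => (g (enum_val i) - g s0)%R] == k)]|
     <= #|F| ^ #|S :\ s0| * e2)%N.
Proof.
move=> SB iS sp s0S HA He2 Hpd.
set Gk := [set g | _].
case: (set_0Vmem Gk) => [->|[g1 g1G]]; first by rewrite cards0.
move: (g1G); rewrite inE => /andP[/andP[/forall_inP z1 nd1] /eqP k1].
have ag1 : affine_on B g1 by case/and4P: nd1.
apply: leq_trans (tset_bound SB iS sp s0S nd1 HA He2 Hpd).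
have Htr : forall g, g \in Gk -> forall b, b \in B -> g b = g1 b + (g s0 - g1 s0).
  move=> g; rewrite inE => /andP[/andP[_ ndg] /eqP kg].
  have ag : affine_on B g by case/and4P: ndg.
  apply: (trans_on SB sp ag ag1) => s sS.
  case: (eqVneq s s0) => [->|ne]; first by rewrite !subrr.
  have sS' : s \in S :\ s0 by rewrite in_setD1 ne.
  move: kg; rewrite -k1 => /ffunP /(_ (enum_rank_in sS' s)).
  by rewrite !ffunE enum_rankK_in.
have injT : {in Gk &, injective (fun g : {ffun 'rV[F]_m -> 'rV[F]_n} => g s0 - g1 s0)}.
  move=> g g' gG g'G /= E; apply/ffunP => x.
  case xB: (x \in B); first by rewrite (Htr _ gG _ xB) (Htr _ g'G _ xB) E.
  move: gG g'G; rewrite !inE => /andP[/andP[/forall_inP zg _] _] /andP[/andP[/forall_inP zg' _] _].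
  have xnB : x \in ~: B by rewrite inE xB.
  by rewrite (eqP (zg _ xnB)) (eqP (zg' _ xnB)).
rewrite -(card_in_imset injT); apply: subset_leq_card; apply/subsetP => t /imsetP[g gG ->].
rewrite inE; apply/forall_inP => b bB; rewrite -(Htr _ gG _ bB).
move: gG; rewrite inE => /andP[/andP[_ /and4P[_ /forall_inP inA _ _]] _].
exact: inA.
Qed.
Local Close Scope ring_scope.
Theorem lemma4p1 (F : finFieldType) (m : nat) (B : {set 'rV[F]_m})
  (Fam : config F -> Prop) (n e1 e2 : nat) :
  (1 <= rank_aff B)%N ->
  (rank_aff B <= n)%N ->
  is_ex_aff n (prod_family B Fam) e1 ->
  is_ex_aff (n - rank_aff B + 1) Fam e2 ->
  (c_min B n e1 <=
     #|F| ^ (rank_aff B - 1) * (#|F| ^ n) ^ (rank_aff B - 1) * e2)%N.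
Proof.
move=> r1 rn [[A [HA cardA]] _] He2.
pose PS := [pred S : {set 'rV[F]_m} | (S \subset B) && aff_indep S].
have ne : (0 < #|PS|)%N.
  apply/card_gt0P; exists set0; rewrite inE sub0set /=.
  apply/forallP => lam; apply/implyP => _; apply/forall_inP => x; by rewrite inE.
have [S0 HS0 Hmax] := eq_bigmax_cond (fun S : {set 'rV[F]_m} => #|S|) ne.
have Hr : rank_aff B = #|S0| := Hmax.
move: HS0; rewrite inE => /andP[SB iS].
have Smax : forall S' : {set 'rV[F]_m}, S' \subset B -> aff_indep S' -> (#|S'| <= #|S0|)%N.
  by move=> S' a b; rewrite -Hr; apply: (@leq_bigmax_cond _ PS); rewrite inE a b.
have sp := span_max SB iS Smax.
rewrite Hr in r1 rn He2 *.
have [s0 s0S] : exists s0, s0 \in S0 by apply/set0Pn; rewrite -card_gt0.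
have Hp : #|S0 :\ s0| = (#|S0| - 1)%N by rewrite (cardsD1 s0 S0) s0S add1n subn1.
have Hpd : (#|S0 :\ s0| + (n - #|S0| + 1) = n)%N by rewrite Hp; lia.
have Hc : (c_min B n e1 <= nd_count B A)%N.
  rewrite /c_min; apply: (@bigminn_le _ (fun A0 : {set 'rV[F]_n} => #|A0| == e1) (nd_count B)).
  by rewrite cardA.
apply: leq_trans Hc _.
rewrite /nd_count -sum1_card.
rewrite (partition_big (fun g : {ffun 'rV[F]_m -> 'rV[F]_n} =>
   [ffun i : 'I_#|S0 :\ s0| => (g (enum_val i) - g s0)%R]) predT) //=.
apply: leq_trans (_ : _ <= \sum_(k : {ffun 'I_#|S0 :\ s0| -> 'rV[F]_n}) (#|F| ^ #|S0 :\ s0| * e2))%N _.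
  apply: leq_sum => k _.
  apply: leq_trans (fiber_bound k SB iS sp s0S HA He2 Hpd).
  by rewrite -sum1_card; apply/eq_leq/eq_bigl => g; rewrite !inE.
rewrite sum_nat_const card_ffun card_ord card_mx mul1n -Hp.
by rewrite mulnA (mulnC (_ ^ _)).
Qed.
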